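(* Let $G=(V,E)$ be a $(5/4,\varepsilon)$-structured graph (for a sufficiently small constant $\varepsilon>0$), and let $S$ be a core-triangle 2-edge-cover of $G$ with core $C$ and triangles $T_1,\dots,T_k$. Let $F^*\subseteq E$ be such that $(V,F^* )$ is 2-edge-connected and $E(C)\subseteq F^*$, and let $Q^*$ be the set of edges of $F^*$ having at least one endpoint not in $V(C)$. Then $\alpha(Q^* )\ge 4k-|Q^*|+\alpha(S)$.
   Context: A 2-edge-cover of $G=(V,E)$ is $S\subseteq E$ with every node incident to at least two edges of $S$. A graph is 2-edge-connected (2EC) if connected and it stays connected after removing any one edge. $S$ is core-triangle if the components of $(V,S)$ are exactly $k+1$ 2EC components: one core $C$ and $k\ge0$ triangles $T_1,\dots,T_k$, and no edge of $G$ joins nodes of two distinct triangles. A valid choice of $Q_i$ for $T_i$ is $Q_i=(E(T_i)\setminus\{u_iv_i\})\cup\{u_iu_i',v_iv_i'\}$ with $u_i\ne v_i\in V(T_i)$, $u_i',v_i'\in V(C)$, $u_iu_i',v_iv_i'\in E$; a valid $Q$ is $\bigcup_iQ_i$ with each $Q_i$ valid. For $F\subseteq E$, $\alpha(F)$ is the number of connected components of $(V,F)$; $\alpha(S)$ is the minimum of $\alpha(Q)$ over valid $Q$. Structured graphs: a graph is 2VC if it has at least 3 nodes, is connected and has no 1-vertex-cut; a 2EC subgraph $D$ of $G$ is $\alpha$-contractible if every 2EC spanning subgraph of $G$ has at least $\frac1\alpha|E(D)|$ edges with both endpoints in $V(D)$; an edge $uv$ is irrelevant if $\{u,v\}$ is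 a 2-vertex-cut; a 2-vertex-cut $\{u,v\}$ is isolating if $G\setminus\{u,v\}$ has exactly two components one of which is a single node, otherwise non-isolating; $G$ is $(\alpha,\varepsilon)$-structured if simple, 2VC, with at least $2/\varepsilon$ nodes, and with no $\alpha$-contractible subgraph on at most $1/\varepsilon$ nodes, no irrelevant edge, and no non-isolating 2-vertex-cut. *)

(* Defs.v *)
(* Graphs on a finite vertex type T; edges are 2-element
   subsets {set T}; an edge set is a {set {set T}}. *)
From HB Require Import structures.
From mathcomp Require Import all_boot all_order all_algebra.
From mathcomp Require Import reals.
Set Implicit Arguments. Unset Strict Implicit. Unset Printing Implicit Defensive.
Import Order.TTheory GRing.Theory Num.Theory.

Section Graphs.
Variable T : finType.
Implicit Types (A C W X : {set T}) (E F S D Q : {set {set T}}).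

Definition edge_rel F : rel T := fun x y => [set x; y] \in F.

Definition restr A F : rel T :=
  fun x y => [&& x \in A, y \in A & edge_rel F x y].

Definition connected_on A F : bool :=
  [forall x in A, forall y in A, connect (restr A F) x y].

Definition two_ec_on A F : bool :=
  connected_on A F && [forall e in F, connected_on A (F :\ e)].

Definition comps A F : {set {set T}} :=
  [set [set y in A | connect (restr A F) x y] | x in A].

Definition alpha F : nat := #|comps setT F|.

Definition edges_in A F : {set {set T}} := [set e in F | e \subset A].

Definition simple_graph E : bool := [forall e in E, #|e| == 2].

Definition two_vc E : bool :=
  [&& 3 <= #|T|, connected_on setT E & [forall v, connected_on (~: [set v]) E]].

Definition vcut2 E u v : bool :=
  (u != v) && ~~ connected_on (~: [set u; v]) E.

Definition isolating E u v : bool :=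
  (#|comps (~: [set u; v]) E| == 2) &&
  [exists X in comps (~: [set u; v]) E, #|X| == 1].

Definition two_edge_cover S : Prop :=
  forall v : T, 2 <= #|[set e in S | v \in e]|.

Definition alpha_contractible (R : realFieldType) (a : R) E W D : Prop :=
  [/\ D \subset edges_in W E, 2 <= #|W|, two_ec_on W D &
      forall H : {set {set T}}, H \subset E -> two_ec_on setT H ->
        (#|D|%:R / a <= (#|edges_in W H|%:R : R))%R].

Definition structured (R : realFieldType) (a eps : R) E : Prop :=
  [/\ simple_graph E, two_vc E, (2 / eps <= (#|T|%:R : R))%R,
      (forall W D, ((#|W|%:R : R) <= 1 / eps)%R -> ~ alpha_contractible a E W D) &
      (forall u v, [set u; v] \in E -> ~~ vcut2 E u v) /\
      (forall u v, vcut2 E u v -> isolating E u v)].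

Definition core_triangle E S C (Ts : {set {set T}}) : Prop :=
  [/\ S \subset E, two_edge_cover S,
      comps setT S = C |: Ts, C \notin Ts &
      (forall X, X \in comps setT S -> two_ec_on X (edges_in X S))] /\
  (
      (forall X, X \in Ts -> #|X| = 3 /\
          forall x y, x \in X -> y \in X -> x != y -> [set x; y] \in S)) /\
      (forall X Y, X \in Ts -> Y \in Ts -> X != Y ->
          forall x y, x \in X -> y \in Y -> [set x; y] \notin E).

Definition Qi S X (c : T * T * T * T) : {set {set T}} :=
  let: (u, v, u', v') := c in
  (edges_in X S :\ [set u; v]) :|: [set [set u; u']; [set v; v']].

Definition valid_choice E C X (c : T * T * T * T) : bool :=
  let: (u, v, u', v') := c in
  [&& u != v, u \in X, v \in X, u' \in C, v' \in C,
      [set u; u'] \in E & [set v; v'] \in E].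

Definition validQ E S C (Ts : {set {set T}}) Q : bool :=
  [exists f : {ffun {set T} -> T * T * T * T},
     [forall X in Ts, valid_choice E C X (f X)] &&
     (Q == \bigcup_(X in Ts) Qi S X (f X))].

(* alpha(S) = min over valid Q of alpha(Q) (#|T| is an upper bound for alpha) *)
Definition alphaS E S C (Ts : {set {set T}}) : nat :=
  \big[minn/#|T|]_(Q : {set {set T}} | validQ E S C Ts Q) alpha Q.

Definition Qstar C F : {set {set T}} := [set e in F | ~~ (e \subset C)].

End Graphs.

(* Main.v *)
Require Import Defs.
From HB Require Import structures.
From mathcomp Require Import all_boot all_order all_algebra.
From mathcomp Require Import reals.
From mathcomp Require Import zify.
Set Implicit Arguments. Unset Strict Implicit. Unset Printing Implicit Defensive.

Section G.
Variable T : finType.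
Implicit Types (F G H : {set {set T}}) (K : {set T}).

Definition cls F (x : T) : {set T} := [set y in setT | connect (restr setT F) x y].

Lemma restrT F x y : restr setT F x y = ([set x; y] \in F).
Proof. by rewrite /restr !in_setT. Qed.

Lemma restr_sym F : symmetric (restr setT F).
Proof. by move=> x y; rewrite !restrT setUC. Qed.

Lemma conn_sym F : connect_sym (restr setT F).
Proof. exact: (sym_connect_sym (@restr_sym F)). Qed.

Lemma closed_conn (r : rel T) (A : {set T}) x y :
  (forall z t, z \in A -> r z t -> t \in A) -> connect r x y -> x \in A -> y \in A.
Proof.
move=> cl /connectP[p pp ->]; elim: p x pp => //= z p IH x /andP[rxz pp] xA.
exact: IH pp (cl _ _ xA rxz).
Qed.

Lemma conn_mono F G x y : F \subset G -> connect (restr setT F) x y -> connect (restr setT G) x y.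
Proof.
move=> sFG; apply: connect_sub => a b; rewrite !restrT => ab.
by apply: connect1; rewrite restrT (subsetP sFG).
Qed.

Lemma cls_eq F x y : connect (restr setT F) x y -> cls F x = cls F y.
Proof.
move=> cxy; apply/setP => z; rewrite !inE.
apply/idP/idP => h; first by apply: connect_trans h; rewrite conn_sym.
exact: connect_trans cxy h.
Qed.

Lemma cls_refl F x : x \in cls F x.
Proof. by rewrite !inE connect0. Qed.

Lemma cls_in F x y : (y \in cls F x) = connect (restr setT F) x y.
Proof. by rewrite !inE. Qed.

Lemma alphaE F : alpha F = #|[set cls F x | x in setT]|.
Proof. by []. Qed.

Definition hmap G (A : {set T}) : {set T} :=
  if [pick y in A] is Some y then cls G y else set0.

Lemma hmap_cls F G x : F \subset G -> hmap G (cls F x) = cls G x.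
Proof.
move=> sFG; rewrite /hmap; case: pickP => [y|/(_ x)]; last by rewrite cls_refl.
by rewrite cls_in => /(conn_mono sFG) /cls_eq ->.
Qed.

Lemma imset_hmap F G : F \subset G ->
  [set cls G x | x in setT] = hmap G @: [set cls F x | x in setT].
Proof.
move=> sFG; rewrite -imset_comp; apply: eq_imset => x /=; by rewrite hmap_cls.
Qed.

Lemma alpha_anti F G : F \subset G -> alpha G <= alpha F.
Proof. by move=> sFG; rewrite !alphaE (imset_hmap sFG) leq_imset_card. Qed.

Lemma alpha_merge F a b : ~~ connect (restr setT F) a b ->
  (alpha (F :|: [set [set a; b]])).+1 <= alpha F.
Proof.
move=> nab; set G := F :|: _.
have sFG : F \subset G by apply: subsetUl.
rewrite !alphaE (imset_hmap sFG).
set A := [set cls F x | x in setT].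
have bA : cls F b \in A by apply: imset_f.
have aA : cls F a \in A :\ cls F b.
  rewrite !inE imset_f // andbT; apply/eqP => e.
  by move: (cls_refl F b); rewrite -e cls_in (negbTE nab).
have -> : hmap G @: A = hmap G @: (A :\ cls F b).
  apply/setP => K; apply/imsetP/imsetP => [[L LA ->]|[L /setD1P[_ LA] ->]]; last by exists L.
  case: (L =P cls F b) => [->|ne]; last by exists L => //; rewrite !inE LA andbT; apply/eqP.
  exists (cls F a) => //; rewrite !hmap_cls //; apply: cls_eq.
  rewrite conn_sym; apply: connect1; rewrite restrT !inE eqxx orbT //.
by rewrite (cardsD1 (cls F b) A) bA add1n ltnS leq_imset_card.
Qed.

Lemma alpha_save F a b : connect (restr setT (F :\ [set a; b])) a b ->
  alpha (F :\ [set a; b]) <= alpha F.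
Proof.
move=> cab; rewrite !alphaE; apply: subset_leq_card; apply/subsetP => K /imsetP[x _ ->].
apply/imsetP; exists x => //; apply/setP => y; rewrite !cls_in.
apply/idP/idP; first by apply: conn_mono; apply: subsetDl.
apply: connect_sub y => {}x y; rewrite restrT => xy.
case: ([set x; y] =P [set a; b]) => [e|ne]; last first.
  by apply: connect1; rewrite restrT !inE xy andbT; apply/eqP.
have : x \in [set a; b] by rewrite -e set21.
have : y \in [set a; b] by rewrite -e set22.
rewrite !inE => /orP[]/eqP-> /orP[]/eqP->; rewrite ?connect0 //.
by rewrite conn_sym.
Qed.

Lemma connK F a b x y : ~~ connect (restr setT F) x a -> ~~ connect (restr setT F) x b ->
  connect (restr setT (F :|: [set [set a; b]])) x y -> connect (restr setT F) x y.
Proof.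
move=> na nb cxy; rewrite -cls_in; apply: (closed_conn _ cxy (cls_refl F x)).
move=> z t; rewrite cls_in restrT !inE => xz /orP[zt|/eqP e].
  by apply: connect_trans xz (connect1 _); rewrite restrT.
have : z \in [set a; b] by rewrite -e set21.
by rewrite !inE => /orP[]/eqP zab; subst z; rewrite ?xz in na nb.
Qed.

Lemma alpha_eqr F G : restr setT F =2 restr setT G -> alpha F = alpha G.
Proof.
move=> eFG; rewrite !alphaE.
suff -> : [set cls F x | x in setT] = [set cls G x | x in setT] by [].
apply: eq_imset => x.
by apply/setP => y; rewrite !cls_in (eq_connect eFG).
Qed.

Lemma alpha_add1 F e : alpha F <= (alpha (F :|: [set e])).+1.
Proof.
have [[a b] /= /eqP-> |hne] := pickP (fun p : T * T => e == [set p.1; p.2]); last first.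
  rewrite (@alpha_eqr F (F :|: [set e])) // => x y; rewrite !restrT !inE.
  case: ([set x; y] =P e) => [ex|]; last by rewrite orbF.
  by move: (hne (x, y)); rewrite /= ex eqxx.
set G := F :|: _; have sFG : F \subset G by apply: subsetUl.
rewrite !alphaE; set A := [set cls F x | x in setT].
have bA : cls F b \in A by apply: imset_f.
rewrite (cardsD1 (cls F b) A) bA add1n ltnS.
rewrite -(@card_in_imset _ _ (hmap G)); last first.
  move=> L1 L2 /setD1P[n1 /imsetP[x _ eL1]] /setD1P[n2 /imsetP[y _ eL2]]; subst L1 L2.
  rewrite !hmap_cls // => eq; apply: cls_eq.
  have cG : connect (restr setT G) x y by rewrite -cls_in eq cls_refl.
  have nxb : ~~ connect (restr setT F) x b.
    apply: contraNN n1 => xb; apply/eqP; exact: cls_eq.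
  have nyb : ~~ connect (restr setT F) y b.
    apply: contraNN n2 => xb; apply/eqP; exact: cls_eq.
  have [xa|nxa] := boolP (connect (restr setT F) x a); last exact: connK nxa nxb cG.
  have [ya|nya] := boolP (connect (restr setT F) y a); last first.
    by rewrite conn_sym; apply: connK nya nyb _; rewrite conn_sym.
  by apply: connect_trans xa _; rewrite conn_sym.
rewrite (imset_hmap sFG) -/A; apply: subset_leq_card; apply: imsetS; apply: subsetDl.
Qed.

Definition phi F := alpha F + #|F|.

Lemma phi_add F e : phi (F :|: [set e]) <= (phi F).+1.
Proof.
have := alpha_anti (subsetUl F [set e]); rewrite /phi [F :|: _]setUC cardsU1.
case: (e \in F); rewrite /= ?add0n ?add1n; lia.
Qed.

Lemma phi_mono F G : F \subset G -> phi F <= phi G.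
Proof.
move=> sFG; move: {2}#|G :\: F| (erefl #|G :\: F|) => n.
elim: n F sFG => [|n IH] F sFG hn.
  have -> : G = F; last by [].
  apply/eqP; rewrite eqEsubset sFG andbT; apply/subsetP => x xG.
  case xF: (x \in F) => //; move/eqP: hn; rewrite cards_eq0 => /eqP/setP/(_ x).
  by rewrite !inE xG xF.
have /set0Pn[e eGF] : G :\: F != set0 by apply/eqP => h; rewrite h cards0 in hn.
move: (eGF); rewrite inE => /andP[eF eG].
have sF' : F :|: [set e] \subset G by rewrite subUset sFG sub1set.
have hn' : #|G :\: (F :|: [set e])| = n.
  move: hn; rewrite (cardsD1 e) eGF add1n => -[<-]; apply: eq_card => x.
  by rewrite !inE negb_or; case: (x == e); rewrite ?andbF ?andbT //= andbC.
apply: leq_trans (IH _ sF' hn'); rewrite /phi setUC cardsU1 eF add1n addnS setUC.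
by rewrite -addSn leq_add2r alpha_add1.
Qed.

Lemma phi_merge F a b : ~~ connect (restr setT F) a b ->
  phi (F :|: [set [set a; b]]) <= phi F.
Proof.
move=> nab; have := alpha_merge nab; rewrite /phi [F :|: _]setUC cardsU1.
case: (_ \in F); rewrite /= ?add0n ?add1n; lia.
Qed.

Lemma phi_save F a b : [set a; b] \in F ->
  connect (restr setT (F :\ [set a; b])) a b ->
  (phi (F :\ [set a; b])).+1 <= phi F.
Proof.
move=> abF cab; have := alpha_save cab; rewrite /phi (cardsD1 [set a; b] F) abF.
by rewrite add1n addnS ltnS leq_add2r.
Qed.

Lemma neighbor H a b : a != b -> connect (restr setT H) a b ->
  exists c, [set c; b] \in H /\ connect (restr setT (H :\ [set c; b])) a c.
Proof.
move=> nab cab; set Hb := [set e in H | b \notin e].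
have nb : ~~ connect (restr setT Hb) a b.
  apply/negP => cb.
  have : b \in ~: [set b].
    have cl : forall z t, z \in ~: [set b] -> restr setT Hb z t -> t \in ~: [set b].
      move=> z t; rewrite !inE restrT inE => zb /andP[ztH].
      by apply: contra => /eqP <-; rewrite set22.
    have ha : a \in ~: [set b] by rewrite !inE.
    exact: closed_conn cl cb ha.
  by rewrite !inE eqxx.
have [/existsP[z /andP[za zbH]]|] := boolP [exists z, (z \in cls Hb a) && ([set z; b] \in H)].
  exists z; split => //; move: za; rewrite cls_in; apply: conn_mono.
  apply/subsetP => e; rewrite !inE => /andP[eH be]; rewrite eH andbT.
  by apply: contraNN be => /eqP->; rewrite set22.
rewrite negb_exists => /forallP hz.
have : b \in cls Hb a; last by rewrite cls_in (negbTE nb).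
apply: (closed_conn _ cab (cls_refl _ _)) => z t za; rewrite restrT => zt.
have [bzt|nbzt] := boolP (b \in [set z; t]).
  move: bzt; rewrite !inE => /orP[]/eqP eb.
    by subst z; move: za; rewrite cls_in (negbTE nb).
  by subst t; move: (hz z); rewrite za zt.
move: za; rewrite !cls_in => za; apply: connect_trans za (connect1 _).
by rewrite restrT !inE zt; move: nbzt; rewrite !inE => ->.
Qed.

Lemma gstep H a b : a != b -> [set a; b] \notin H ->
  phi (H :|: [set [set a; b]]) <= phi H \/
  exists c, [set c; b] \in H /\ phi ((H :|: [set [set a; b]]) :\ [set c; b]) <= phi H.
Proof.
move=> nab nH; have [cab|ncab] := boolP (connect (restr setT H) a b); last by left; apply: phi_merge.
right; have [c [cbH cac]] := neighbor nab cab; exists c; split => //.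
have ne : [set c; b] != [set a; b] by apply: contraNN nH => /eqP <-.
have := @phi_save (H :|: [set [set a; b]]) c b; rewrite !inE cbH => /(_ isT).
have -> : connect (restr setT ((H :|: [set [set a; b]]) :\ [set c; b])) c b.
  apply: connect_trans (_ : connect _ c a) _.
    rewrite conn_sym; apply: conn_mono cac; apply/subsetP => e; rewrite !inE.
    by case/andP => -> ->.
  by apply: connect1; rewrite restrT !inE eqxx orbT eq_sym ne.
move/(_ isT) => h1; have h2 := phi_add H [set a; b]; by rewrite -ltnS (leq_trans h1 h2).
Qed.
Definition Mset (oc : option T) (b : T) : {set {set T}} :=
  if oc is Some c then [set [set c; b]] else set0.

Lemma gstep2 H a b : a != b -> [set a; b] \notin H ->
  exists oc : option T, (forall c, oc = Some c -> [set c; b] \in H) /\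
    phi ((H :|: [set [set a; b]]) :\: Mset oc b) <= phi H.
Proof.
move=> nab nH; case: (gstep nab nH) => [h|[c [cH h]]].
  by exists None; split => //; rewrite /Mset setD0.
exists (Some c); split; first by move=> c' [<-].
suff -> : (H :|: [set [set a; b]]) :\: Mset (Some c) b = (H :|: [set [set a; b]]) :\ [set c; b] by [].
by [].
Qed.

Lemma inM e oc b : (e \in Mset oc b) = (if oc is Some c then e == [set c; b] else false).
Proof. by case: oc => [c|]; rewrite /Mset ?inE. Qed.

Definition pick2 (c1 c2 : T) (oc : option T) :=
  if oc is Some c then (if c1 == c then c2 else c1) else c1.

Lemma pick2_neq c1 c2 oc c : c1 != c2 -> oc = Some c -> pick2 c1 c2 oc != c.
Proof. by move=> n12 ->; rewrite /=; case: (c1 =P c) => [e|/eqP //]; rewrite -e eq_sym. Qed.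

Lemma pick2_in c1 c2 oc (P : T -> Prop) : P c1 -> P c2 -> P (pick2 c1 c2 oc).
Proof. by case: oc => [c|] //=; case: eqP. Qed.
End G.

Section S2.
Set Default Proof Using "All".
Variable T : finType.
Variables (E S : {set {set T}}) (C : {set T}) (Ts Fs : {set {set T}}).
Hypothesis hsimple : simple_graph E.
Hypothesis hvc : two_vc E.
Hypothesis hSE : S \subset E.
Hypothesis hcomps : comps setT S = C |: Ts.
Hypothesis hCT : C \notin Ts.
Hypothesis htri : forall X, X \in Ts -> #|X| = 3 /\
          forall x y, x \in X -> y \in X -> x != y -> [set x; y] \in S.
Hypothesis hnoTT : forall X Y, X \in Ts -> Y \in Ts -> X != Y ->
          forall x y, x \in X -> y \in Y -> [set x; y] \notin E.
Hypothesis hFE : Fs \subset E.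
Hypothesis h2ec : two_ec_on setT Fs.

Lemma pairE_neq a b : [set a; b] \in E -> a != b.
Proof.
move=> ab; move/forall_inP: hsimple => /(_ _ ab); rewrite cards2.
by case: (a != b).
Qed.

Lemma pairF_neq a b : [set a; b] \in Fs -> a != b.
Proof. by move=> h; apply: pairE_neq; apply: (subsetP hFE). Qed.

Lemma edgeE e : e \in E -> exists a b, a != b /\ e = [set a; b].
Proof. by move=> eE; apply/cards2P; move/forall_inP: hsimple => /(_ _ eE). Qed.

Lemma comps_cls K : K \in comps setT S -> exists x, K = cls S x.
Proof. by case/imsetP => x _ ->; exists x. Qed.

Lemma cls_comps x : cls S x \in comps setT S.
Proof. exact: imset_f. Qed.

Lemma comps_disj K1 K2 t : K1 \in comps setT S -> K2 \in comps setT S ->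
  t \in K1 -> t \in K2 -> K1 = K2.
Proof.
move=> /comps_cls[x ->] /comps_cls[y ->]; rewrite !cls_in => xt yt.
rewrite (cls_eq xt) (cls_eq yt) //.
Qed.

Lemma C_comps : C \in comps setT S.
Proof. by rewrite hcomps setU11. Qed.

Lemma T_comps X : X \in Ts -> X \in comps setT S.
Proof. by move=> XT; rewrite hcomps setU1r. Qed.

Lemma vert_part t : t \in C \/ exists2 X, X \in Ts & t \in X.
Proof.
have := cls_comps t; rewrite hcomps !inE => /orP[/eqP e|h].
  by left; rewrite -e cls_refl.
by right; exists (cls S t) => //; apply: cls_refl.
Qed.

Lemma TnC X t : X \in Ts -> t \in X -> t \notin C.
Proof.
move=> XT tX; apply/negP => tC.
have := comps_disj (T_comps XT) C_comps tX tC => e.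
by move: hCT; rewrite -e XT.
Qed.

Lemma TnT X Y t : X \in Ts -> Y \in Ts -> X != Y -> t \in X -> t \notin Y.
Proof.
move=> XT YT nXY tX; apply/negP => tY.
by move: nXY; rewrite (comps_disj (T_comps XT) (T_comps YT) tX tY) eqxx.
Qed.

Lemma C_nonempty : exists c, c \in C.
Proof. by have [x ->] := comps_cls C_comps; exists x; apply: cls_refl. Qed.

Lemma nbr_loc X z t : X \in Ts -> z \in X -> [set z; t] \in E -> t \in X \/ t \in C.
Proof.
move=> XT zX zt; case: (vert_part t) => [|[Y YT tY]]; first by right.
case: (X =P Y) => [->|/eqP nXY]; first by left.
by move: (hnoTT XT YT nXY zX tY); rewrite zt.
Qed.

Lemma conn_Fs x y : connect (restr setT Fs) x y.
Proof.
case/andP: h2ec => /forall_inP h _; move: (h x (in_setT x)) => /forall_inP /(_ y (in_setT y)).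
by [].
Qed.

Lemma conn_Fs_del e x y : e \in Fs -> connect (restr setT (Fs :\ e)) x y.
Proof.
case/andP: h2ec => _ /forall_inP h eF; move: (h e eF) => /forall_inP /(_ x (in_setT x)).
by move=> /forall_inP /(_ y (in_setT y)).
Qed.

Lemma other_vertex (z : T) : exists t, t != z.
Proof.
case/and3P: hvc => h _ _; apply/existsP; apply: contraLR h; rewrite negb_exists.
move=> /forallP hn; rewrite -leqNgt -cardsT.
have -> : [set: T] = [set z].
  by apply/setP => t; rewrite !inE; move: (hn t); rewrite negbK => ->.
by rewrite cards1.
Qed.

Lemma has_nbr (G : {set {set T}}) (z : T) : (forall x y, connect (restr setT G) x y) ->
  exists y, [set z; y] \in G /\ y != z.
Proof.
move=> hc; have [t tz] := other_vertex z.
have [/existsP[y /andP[h1 h2]]|hn] := boolP [exists y, ([set z; y] \in G) && (y != z)].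
  by exists y.
have : t \in [set z].
  apply: (closed_conn _ (hc z t)); last by rewrite inE.
  move=> a b; rewrite inE => /eqP-> ; rewrite restrT inE => zb.
  move: hn; rewrite negb_exists => /forallP /(_ b); rewrite zb /= negbK.
  by move=> /eqP ->.
by rewrite inE (negbTE tz).
Qed.

Lemma deg2 z : exists y1 y2, [/\ y1 != y2, [set z; y1] \in Fs & [set z; y2] \in Fs].
Proof.
have [y1 [zy1 _]] := has_nbr z conn_Fs.
have [y2 [] ] := has_nbr z (fun x y => conn_Fs_del x y zy1).
rewrite !inE => /andP[ne zy2] _; exists y1, y2; split => //.
by apply: contraNN ne => /eqP->.
Qed.

Lemma S1_nonempty X : X \in Ts -> exists z c, [/\ z \in X, c \in C & [set z; c] \in Fs].
Proof.
move=> XT; have [x xX] : exists x, x \in X.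
  by apply/set0Pn; rewrite -card_gt0 (proj1 (htri XT)).
have [c cC] := C_nonempty.
have [/existsP[z /existsP[c' /and3P[zX cC' zc]]]|hn] :=
  boolP [exists z, exists c, [&& z \in X, c \in C & [set z; c] \in Fs]].
  by exists z, c'.
have : c \in X; last by move=> cX; move: (TnC XT cX); rewrite cC.
apply: (closed_conn _ (conn_Fs x c) xX) => z t zX; rewrite restrT => zt.
have [//|tC] := nbr_loc XT zX (subsetP hFE _ zt).
move: hn; rewrite negb_exists => /forallP/(_ z); rewrite negb_exists => /forallP/(_ t).
by rewrite zX tC zt.
Qed.

Lemma vc_other X x : X \in Ts -> x \in X ->
  exists z c, [/\ z \in X, z != x, c \in C & [set z; c] \in E].
Proof.
move=> XT xX; have [z0 z0X z0x] : exists2 z0, z0 \in X & z0 != x.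
  have : 0 < #|X :\ x| by move: (proj1 (htri XT)); rewrite (cardsD1 x) xX add1n => -[->].
  by rewrite card_gt0 => /set0Pn[z0]; rewrite !inE => /andP[]; exists z0.
have [c cC] := C_nonempty.
have [/existsP[z /existsP[c' /and4P[zX zx cC' zc]]]|hn] :=
  boolP [exists z, exists c, [&& z \in X, z != x, c \in C & [set z; c] \in E]].
  by exists z, c'.
have cx : c != x by apply: contraTneq xX => <-; apply/negP => cX; move: (TnC XT cX); rewrite cC.
case/and3P: hvc => _ _ /forallP /(_ x) /forall_inP /(_ z0) h.
have {h} : connect (restr (~: [set x]) E) z0 c.
  by move: (h); rewrite !inE z0x => /(_ isT) /forall_inP /(_ c); rewrite !inE cx => /(_ isT).
move=> hc.
have : c \in X :\ x; last by rewrite !inE => /andP[_ cX]; move: (TnC XT cX); rewrite cC.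
apply: (closed_conn _ hc); last by rewrite !inE z0x z0X.
move=> z t; rewrite !inE => /andP[zx zX]; rewrite /restr /edge_rel !inE => /and3P[_ tx zt].
rewrite tx /=.
have [tX|tC] := nbr_loc XT zX zt; first by [].
move: hn; rewrite negb_exists => /forallP/(_ z); rewrite negb_exists => /forallP/(_ t).
by rewrite zX zx tC zt.
Qed.

Lemma pair_eq (a b c d : T) :
  ([set a; b] == [set c; d]) = ((a == c) && (b == d)) || ((a == d) && (b == c)).
Proof.
apply/eqP/idP => [h|].
  have ha : a \in [set c; d] by rewrite -h set21.
  have hb : b \in [set c; d] by rewrite -h set22.
  have hc : c \in [set a; b] by rewrite h set21.
  have hd : d \in [set a; b] by rewrite h set22.
  case/set2P: ha => ?; subst a.
    case/set2P: hd => ?; subst d; rewrite ?eqxx //.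
    by case/set2P: hb => ?; subst b; rewrite ?eqxx.
  case/set2P: hc => ?; subst c; rewrite ?eqxx ?orbT //.
  by case/set2P: hb => ?; subst b; rewrite ?eqxx ?orbT.
by case/orP => /andP[/eqP-> /eqP->] //; rewrite setUC.
Qed.

Lemma pair_neqP (a b c d : T) : ~ (a = c /\ b = d) -> ~ (a = d /\ b = c) ->
  [set a; b] != [set c; d].
Proof.
move=> h1 h2; rewrite pair_eq; apply/negP => /orP[]/andP[/eqP e1 /eqP e2].
  exact: h1.
exact: h2.
Qed.

Lemma tri3 X x : X \in Ts -> x \in X -> exists y w,
  [/\ x != y, x != w, y != w & forall t, (t \in X) = [|| t == x, t == y | t == w]].
Proof.
move=> XT xX; have h3 := proj1 (htri XT).
have /cards2P[y [w [yw e]]] : #|X :\ x| == 2.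
  by move: h3; rewrite (cardsD1 x) xX add1n => -[->].
have yX : y \in X :\ x by rewrite e set21.
have wX : w \in X :\ x by rewrite e set22.
move: yX wX; rewrite !inE => /andP[yx _] /andP[wx _].
exists y, w; split; [by rewrite eq_sym | by rewrite eq_sym | by [] | ].
move=> t; case: (t =P x) => [->|/eqP tx]; first by rewrite xX; apply/esym/orP; left.

have : (t \in X :\ x) = (t \in [set y; w]) by rewrite e.
by rewrite !inE tx.
Qed.

Lemma Qi_mem X u v w u' v' e : X \in Ts ->
  u != v -> u != w -> v != w ->
  (forall t, (t \in X) = [|| t == u, t == v | t == w]) ->
  (e \in Qi S X (u, v, u', v')) =
  [|| e == [set u; w], e == [set v; w], e == [set u; u'] | e == [set v; v']].
Proof.
move=> XT uv uw vw hX; rewrite /Qi !inE.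
have Xin : forall t, t \in X -> [|| t == u, t == v | t == w] by move=> t; rewrite hX.
suff -> : [&& e != [set u; v], e \in S & e \subset X] = (e == [set u; w]) || (e == [set v; w]).
  by rewrite -!orbA.
apply/idP/idP.
  case/and3P => nuv eS eX.
  have [a [b [ab eab]]] := edgeE (subsetP hSE _ eS); subst e.
  have ha := Xin a (subsetP eX _ (set21 a b)); have hb := Xin b (subsetP eX _ (set22 a b)).
  move: nuv; rewrite !pair_eq.
  case/or3P: ha => /eqP ?; subst a; case/or3P: hb => /eqP ?; subst b;
    rewrite ?eqxx ?orbT ?andbT //= ?(negbTE uv) ?(negbTE uw) ?(negbTE vw) in ab * ;
    rewrite ?[v == u]eq_sym ?[w == u]eq_sym ?[w == v]eq_sym ?(negbTE uv) ?(negbTE uw) ?(negbTE vw) ?orbT //.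
case/orP => /eqP ->.
  rewrite pair_eq eqxx /= (negbTE uv) [w == u]eq_sym (negbTE uw) andbF /=.
  rewrite orbF [w == v]eq_sym (negbTE vw) /=.
  rewrite (proj2 (htri XT)) ?hX ?eqxx ?orbT ?(negbTE uw) //.
  by apply/subsetP => t; rewrite !inE hX => /orP[]/eqP->; rewrite ?eqxx ?orbT.
rewrite pair_eq [v == u]eq_sym (negbTE uv) /= [w == u]eq_sym (negbTE uw) andbF /=.
rewrite (proj2 (htri XT)) ?hX ?eqxx ?orbT //.
by apply/subsetP => t; rewrite !inE hX => /orP[]/eqP->; rewrite ?eqxx ?orbT.
Qed.

Section Local.
Variable X : {set T}.
Hypothesis XT : X \in Ts.
Variable R : {set {set T}}.
Hypothesis hR : forall e z, e \in R -> z \in e -> z \notin X.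

Definition PX := [set e in Fs | [exists z, (z \in e) && (z \in X)]].
Definition H0 := R :|: PX.

Definition goal c := valid_choice E C X c /\ phi (R :|: Qi S X c) <= phi H0.

Lemma inH0 (e : {set T}) z : e \in Fs -> z \in e -> z \in X -> e \in H0.
Proof. by move=> eF ze zX; rewrite !inE eF /=; apply/orP; right; apply/existsP; exists z; rewrite ze. Qed.

Lemma inH0p a b : [set a; b] \in Fs -> a \in X -> [set a; b] \in H0.
Proof. by move=> h aX; apply: inH0 h (set21 a b) aX. Qed.

Lemma notR (e : {set T}) z : z \in e -> z \in X -> e \notin R.
Proof. by move=> ze zX; apply/negP => eR; move: (hR eR ze); rewrite zX. Qed.

Lemma XC_neq a c : a \in X -> c \in C -> (a == c) = false.
Proof. by move=> aX cC; apply/negbTE; apply: contraTneq cC => <-; apply: TnC XT aX. Qed.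

Lemma inD (e m : {set T}) : e \in H0 -> e != m -> e \in H0 :\ m.
Proof. by move=> h n; apply/setD1P. Qed.

Section Roles.
Variables (u v w : T).
Hypotheses (uv : u != v) (uw : u != w) (vw : v != w).
Hypothesis hX : forall t, (t \in X) = [|| t == u, t == v | t == w].

Lemma uX : u \in X. Proof. by rewrite hX eqxx. Qed.
Lemma vX : v \in X. Proof. by rewrite hX eqxx orbT. Qed.
Lemma wX : w \in X. Proof. by rewrite hX eqxx !orbT. Qed.

Lemma neqX : ((u == v) = false) * ((v == u) = false) * ((u == w) = false) *
  ((w == u) = false) * ((v == w) = false) * ((w == v) = false).
Proof. by rewrite ![v == u]eq_sym ![w == u]eq_sym ![w == v]eq_sym !(negbTE uv, negbTE uw, negbTE vw). Qed.

Lemma QiE u' v' e : (e \in Qi S X (u, v, u', v')) =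
  [|| e == [set u; w], e == [set v; w], e == [set u; u'] | e == [set v; v']].
Proof. exact: Qi_mem. Qed.

Lemma Qi_sub u' v' (H : {set {set T}}) : R \subset H ->
  [set u; w] \in H -> [set v; w] \in H -> [set u; u'] \in H -> [set v; v'] \in H ->
  R :|: Qi S X (u, v, u', v') \subset H.
Proof.
move=> RH h1 h2 h3 h4; apply/subsetP => e; rewrite inE => /orP[eR|].
  exact: (subsetP RH).
by rewrite QiE => /or4P[]/eqP->.
Qed.

Lemma RH0 : R \subset H0. Proof. exact: subsetUl. Qed.

Lemma valid_of u' v' : u' \in C -> v' \in C -> [set u; u'] \in E -> [set v; v'] \in E ->
  valid_choice E C X (u, v, u', v').
Proof. by move=> h1 h2 h3 h4; rewrite /valid_choice uv uX vX h1 h2 h3 h4. Qed.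

Lemma caseA u' v' : u' \in C -> v' \in C ->
  [set u; w] \in Fs -> [set v; w] \in Fs -> [set u; u'] \in Fs -> [set v; v'] \in Fs ->
  goal (u, v, u', v').
Proof.
move=> u'C v'C h1 h2 h3 h4; split; first by apply: valid_of => //; apply: (subsetP hFE).
apply: phi_mono; apply: Qi_sub; rewrite ?RH0 //; apply: inH0p => //; by rewrite ?uX ?vX.
Qed.

Lemma caseB u' v' : u' \in C -> v' \in C ->
  [set u; v] \in Fs -> [set u; w] \in Fs -> [set v; w] \in Fs ->
  [set u; u'] \in Fs -> [set v; v'] \in E ->
  goal (u, v, u', v').
Proof.
move=> u'C v'C h0 h1 h2 h3 h4; split; first by apply: valid_of => //; apply: (subsetP hFE).
set G := H0 :|: [set [set v; v']].
have uvG : [set u; v] \in G by rewrite inE (inH0p h0 uX).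
have inG : forall e, e \in H0 -> e != [set u; v] -> e \in G :\ [set u; v].
  by move=> e eH ne; apply/setD1P; split => //; rewrite inE eH.
have nuw : [set u; w] != [set u; v] by rewrite pair_eq ?neqX ?andbF.
have nvw : [set v; w] != [set u; v] by rewrite pair_eq ?neqX ?andbF.
have hs := @phi_save _ G u v uvG.
have cuv : connect (restr setT (G :\ [set u; v])) u v.
  apply: connect_trans (_ : connect _ u w) _; apply: connect1; rewrite restrT.
    by apply: inG nuw; apply: inH0p h1 uX.
  by rewrite setUC; apply: inG nvw; apply: inH0p h2 vX.
have := hs cuv; have := phi_add H0 [set v; v'] => ha hb.
have le : phi (G :\ [set u; v]) <= phi H0 by rewrite -ltnS (leq_trans hb ha).
apply: leq_trans le; apply: phi_mono; apply: Qi_sub.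
- apply/subsetP => e eR; apply: inG; first exact: (subsetP RH0).
  by apply: contraNneq (notR (set21 u v) uX) => <-.
- by apply: inG nuw; apply: inH0p h1 uX.
- by apply: inG nvw; apply: inH0p h2 vX.
- apply: inG; first by apply: inH0p h3 uX.
  by rewrite pair_eq ?neqX eqxx ?andbF /= [u' == v]eq_sym (XC_neq vX u'C).
- rewrite !inE eqxx orbT andbT pair_eq ?neqX /=.
  by rewrite [v' == u]eq_sym (XC_neq uX v'C) andbF.
Qed.
Lemma inHM (H : {set {set T}}) n oc b e : (e \in H) || (e == n) ->
  (forall c, oc = Some c -> e != [set c; b]) -> e \in (H :|: [set n]) :\: Mset oc b.
Proof.
move=> h1 h2; rewrite inE inM !inE h1 andbT; case: oc h2 => // c /(_ c erefl).
by move=> /negbTE->.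
Qed.

Lemma caseC c1 c2 v' : c1 \in C -> c2 \in C -> c1 != c2 ->
  [set u; c1] \in Fs -> [set u; c2] \in Fs -> v' \in C ->
  [set v; w] \in Fs -> [set u; w] \notin Fs -> [set v; v'] \in Fs ->
  exists c, goal c.
Proof.
move=> c1C c2C n12 h1 h2 v'C hvw huw hvv.
have nH0 : [set w; u] \notin H0.
  rewrite inE negb_or (notR (set21 w u) wX) /= inE negb_and.
  by rewrite setUC huw.
have wu : w != u by rewrite eq_sym.
have [oc [ocH hphi]] := gstep2 wu nH0.
set u' := pick2 c1 c2 oc.
have u'C : u' \in C by apply: (@pick2_in _ c1 c2 oc (fun t => t \in C)).
have hu' : [set u; u'] \in Fs by apply: (@pick2_in _ c1 c2 oc (fun t => [set u; t] \in Fs)).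
exists (u, v, u', v'); split.
  by apply: valid_of => //; apply: (subsetP hFE).
apply: leq_trans hphi; apply: phi_mono; apply: Qi_sub.
- apply/subsetP => e eR; apply: inHM; first by rewrite (subsetP RH0).
  move=> c _; apply: contraNneq (notR (set22 c u) uX) => <-; exact: eR.
- apply: inHM; first by rewrite setUC eqxx orbT.
  move=> c /ocH cH; apply: contraNneq nH0 => e; by rewrite setUC e.
- apply: inHM; first by rewrite (inH0p hvw vX).
  by move=> c _; rewrite pair_eq ?neqX ?andbF.
- apply: inHM; first by rewrite (inH0p hu' uX).
  move=> c oc_c; rewrite pair_eq.
  by rewrite eqxx [u' == u]eq_sym (XC_neq uX u'C) andbF /=; exact: pick2_neq n12 oc_c.
- apply: inHM; first by rewrite (inH0p hvv vX).
  by move=> c _; rewrite pair_eq ?neqX ?andbF [v' == u]eq_sym (XC_neq uX v'C) ?andbF.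
Qed.

Lemma caseD c1 c2 v' : c1 \in C -> c2 \in C -> c1 != c2 ->
  [set u; c1] \in Fs -> [set u; c2] \in Fs -> v' \in C ->
  [set v; w] \notin Fs -> [set u; w] \notin Fs -> [set v; v'] \in Fs ->
  exists c, goal c.
Proof.
move=> c1C c2C n12 h1 h2 v'C hvw huw hvv.
have nH0 : [set v; w] \notin H0.
  by rewrite inE negb_or (notR (set21 v w) vX) /= inE negb_and hvw.
have [oc1 [oc1H hphi1]] := gstep2 vw nH0.
set H1 := (H0 :|: [set [set v; w]]) :\: Mset oc1 w.
have nH1 : [set w; u] \notin H1.
  rewrite !inE negb_and negb_or; apply/orP; right; apply/andP; split.
    rewrite negb_or (notR (set21 w u) wX) /= negb_and.
    by rewrite setUC huw.
  by rewrite pair_eq ?neqX ?andbF.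
have wu : w != u by rewrite eq_sym.
have [oc2 [oc2H hphi2]] := gstep2 wu nH1.
set u' := pick2 c1 c2 oc2.
have u'C : u' \in C by apply: (@pick2_in _ c1 c2 oc2 (fun t => t \in C)).
have hu' : [set u; u'] \in Fs by apply: (@pick2_in _ c1 c2 oc2 (fun t => [set u; t] \in Fs)).
exists (u, v, u', v'); split.
  by apply: valid_of => //; apply: (subsetP hFE).
apply: leq_trans (leq_trans hphi2 hphi1); apply: phi_mono; apply: Qi_sub.
- apply/subsetP => e eR; apply: inHM.
    rewrite inHM ?(subsetP RH0) // => c _.
    by apply: contraNneq (notR (set22 c w) wX) => <-.
  move=> c _; apply: contraNneq (notR (set22 c u) uX) => <-; exact: eR.
- apply: inHM; first by rewrite setUC eqxx orbT.
  move=> c /oc2H cH; apply: contraNneq nH1 => e; by rewrite setUC e.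
- apply: inHM.
    rewrite inHM ?eqxx ?orbT // => c /oc1H cH.
    by apply: contraNneq nH0 => ->.
  by move=> c _; rewrite pair_eq ?neqX ?andbF.
- apply: inHM.
    rewrite inHM ?(inH0p hu' uX) // => c _.
    by rewrite pair_eq ?neqX ?andbF [u' == w]eq_sym (XC_neq wX u'C) ?andbF.
  move=> c oc_c; rewrite pair_eq eqxx [u' == u]eq_sym (XC_neq uX u'C) andbF /=.
  exact: pick2_neq n12 oc_c.
- apply: inHM.
    rewrite inHM ?(inH0p hvv vX) // => c _.
    by rewrite pair_eq ?neqX ?andbF [v' == w]eq_sym (XC_neq wX v'C) ?andbF.
  by move=> c _; rewrite pair_eq ?neqX ?andbF [v' == u]eq_sym (XC_neq uX v'C) ?andbF.
Qed.
End Roles.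

Lemma hX_swap12 a b d : (forall t, (t \in X) = [|| t == a, t == b | t == d]) ->
  forall t, (t \in X) = [|| t == b, t == a | t == d].
Proof. by move=> h t; rewrite h orbA [(t == a) || _]orbC -orbA. Qed.

Lemma hX_swap23 a b d : (forall t, (t \in X) = [|| t == a, t == b | t == d]) ->
  forall t, (t \in X) = [|| t == a, t == d | t == b].
Proof. by move=> h t; rewrite h [(t == b) || _]orbC. Qed.

Lemma nbrF a t : a \in X -> [set a; t] \in Fs -> t != a /\ (t \in X \/ t \in C).
Proof.
move=> aX at_; split; first by rewrite eq_sym; apply: pairF_neq at_.
exact: nbr_loc XT aX (subsetP hFE _ at_).
Qed.

Lemma cnb1 a b d : a != b -> a != d -> b != d ->
  (forall t, (t \in X) = [|| t == a, t == b | t == d]) ->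
  [set a; b] \notin Fs -> exists2 c, c \in C & [set a; c] \in Fs.
Proof.
move=> ab ad bd h nab; have aX : a \in X by rewrite h eqxx.
have [y1 [y2 [n12 e1 e2]]] := deg2 a.
have [n1 [y1X|y1C]] := nbrF aX e1; last by exists y1.
have [n2 [y2X|y2C]] := nbrF aX e2; last by exists y2.
move: y1X y2X; rewrite !h (negbTE n1) (negbTE n2) /=.
case/orP => /eqP ?; subst y1; first by rewrite e1 in nab.
case/orP => /eqP ?; subst y2; first by rewrite e2 in nab.
by rewrite eqxx in n12.
Qed.

Lemma cnb2 a b d : a != b -> a != d -> b != d ->
  (forall t, (t \in X) = [|| t == a, t == b | t == d]) ->
  [set a; b] \notin Fs -> [set a; d] \notin Fs ->
  exists c1 c2, [/\ c1 \in C, c2 \in C, c1 != c2, [set a; c1] \in Fs & [set a; c2] \in Fs].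
Proof.
move=> ab ad bd h nab nad; have aX : a \in X by rewrite h eqxx.
have [y1 [y2 [n12 e1 e2]]] := deg2 a.
have inC : forall y, [set a; y] \in Fs -> y \in C.
  move=> y e; have [n [yX|//]] := nbrF aX e.
  move: yX; rewrite h (negbTE n) /=; case/orP => /eqP ?; subst y.
    by rewrite e in nab.
  by rewrite e in nad.
by exists y1, y2; split => //; apply: inC.
Qed.

Lemma missing a b d : a != b -> a != d -> b != d ->
  (forall t, (t \in X) = [|| t == a, t == b | t == d]) ->
  [set a; b] \notin Fs -> exists c, goal c.
Proof.
move=> ab ad bd h nab.
have nba : [set b; a] \notin Fs by rewrite setUC.
have hba := hX_swap12 h.
have ba : b != a by rewrite eq_sym.
have [ca caC caF] := cnb1 ab ad bd h nab.
have [cb cbC cbF] := cnb1 ba bd ad hba nba.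
have [adF|nad] := boolP ([set a; d] \in Fs); have [bdF|nbd] := boolP ([set b; d] \in Fs).
- by exists (a, b, ca, cb); exact: (caseA ab ad bd h caC cbC adF bdF caF cbF).
  have [c1 [c2 [c1C c2C n12 e1 e2]]] := cnb2 ba bd ad hba nba nbd.
  exact: (caseC ba bd ad hba c1C c2C n12 e1 e2 caC adF nbd caF).
- have [c1 [c2 [c1C c2C n12 e1 e2]]] := cnb2 ab ad bd h nab nad.
  exact: (caseC ab ad bd h c1C c2C n12 e1 e2 cbC bdF nad cbF).
- have [c1 [c2 [c1C c2C n12 e1 e2]]] := cnb2 ab ad bd h nab nad.
  exact: (caseD ab ad bd h c1C c2C n12 e1 e2 cbC nbd nad cbF).
Qed.

Lemma local_goal : exists c, goal c.
Proof.
have [p [c [pX cC pc]]] := S1_nonempty XT.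
have [q [r [pq pr qr h]]] := tri3 XT pX.
have [pqF|npq] := boolP ([set p; q] \in Fs); last exact: missing pq pr qr h npq.
have [prF|npr] := boolP ([set p; r] \in Fs); last first.
  have rq : r != q by rewrite eq_sym.
  exact: missing pr pq rq (hX_swap23 h) npr.
have [qrF|nqr] := boolP ([set q; r] \in Fs); last first.
  have hqrp : forall t, (t \in X) = [|| t == q, t == r | t == p].
    by move=> t; rewrite h orbC -orbA.
  have qp : q != p by rewrite eq_sym.
  have rp : r != p by rewrite eq_sym.
  exact: missing qr qp rp hqrp nqr.
have [z [c' [zX zp c'C zc']]] := vc_other XT pX.
move: zX; rewrite h (negbTE zp) /= => /orP[]/eqP ?; subst z.
  by exists (p, q, c, c'); exact: (caseB pq pr qr h cC c'C pqF prF qrF pc zc').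
have rq : r != q by rewrite eq_sym.
have rqF : [set r; q] \in Fs by rewrite setUC.
by exists (p, r, c, c'); exact: (caseB pr pq rq (hX_swap23 h) cC c'C prF pqF rqF pc zc').
Qed.

Lemma local_alpha : exists c, valid_choice E C X c /\
  alpha (R :|: Qi S X c) + 4 <= alpha H0 + #|PX|.
Proof.
have [[[[u v] u'] v'] [vc hphi]] := local_goal.
exists (u, v, u', v'); split => //.
move: (vc) => /and5P[uv uX vX u'C /and3P[v'C uu'E vv'E]].
have [y [w [uy uw yw h]]] := tri3 XT uX.
have [w3 [uw3 vw3 hX]] : exists w3, [/\ u != w3, v != w3 &
    forall t, (t \in X) = [|| t == u, t == v | t == w3]].
  move: vX; rewrite h [v == u]eq_sym (negbTE uv) /= => /orP[]/eqP ?; subst v.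
    by exists w.
  exists y; split => //; first by rewrite eq_sym.
  exact: hX_swap23.
set Q := Qi S X (u, v, u', v').
have QE := fun e => Qi_mem u' v' e XT uv uw3 vw3 hX.
have Xu' := XC_neq uX u'C; have Xv' := XC_neq uX v'C.
have Yu' := XC_neq vX u'C; have Yv' := XC_neq vX v'C.
have w3X : w3 \in X by rewrite hX eqxx !orbT.
have Wu' := XC_neq w3X u'C; have Wv' := XC_neq w3X v'C.
set q1 := [set u; w3]; set q2 := [set v; w3]; set q3 := [set u; u']; set q4 := [set v; v'].
have pn := pair_neqP.
have ne : forall a b : T, a != b -> a <> b by move=> a b /eqP.
have ne' : forall a b : T, (a == b) = false -> a <> b by move=> a b /negbT /eqP.
have n12 : q1 != q2 by apply: pn => -[e1 e2]; [exact: ne uv e1 | exact: ne uw3 e1].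
have n13 : q1 != q3 by apply: pn => -[e1 e2]; [exact: ne' Wu' e2 | exact: ne uw3 (esym e2)].
have n14 : q1 != q4 by apply: pn => -[e1 e2]; [exact: ne uv e1 | exact: ne' Xv' e1].
have n23 : q2 != q3 by apply: pn => -[e1 e2]; [exact: ne uv (esym e1) | exact: ne' Yu' e1].
have n24 : q2 != q4 by apply: pn => -[e1 e2]; [exact: ne' Wv' e2 | exact: ne vw3 (esym e2)].
have n34 : q3 != q4 by apply: pn => -[e1 e2]; [exact: ne uv e1 | exact: ne' Xv' e1].
have sub4 : q1 |: (q2 |: (q3 |: [set q4])) \subset Q.
  apply/subsetP => e he; rewrite /Q QE; move: he; rewrite !inE => /or4P[]/eqP->; by rewrite eqxx ?orbT.
have c4 : #|q1 |: (q2 |: (q3 |: [set q4]))| = 4.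
  rewrite !cardsU1 cards1 !inE (negbTE n34) (negbTE n23) (negbTE n24).
  by rewrite (negbTE n12) (negbTE n13) (negbTE n14).
have Q4 : 4 <= #|Q| by rewrite -c4 subset_leq_card.
have RQ : R :&: Q = set0.
  apply/setP => e; rewrite inE /Q QE inE; apply/negbTE; apply/andP => -[eR].
  case/or4P => /eqP ?; subst e.
  - by move: (hR eR (set21 u w3)); rewrite uX.
  - by move: (hR eR (set21 v w3)); rewrite vX.
  - by move: (hR eR (set21 u u')); rewrite uX.
  - by move: (hR eR (set21 v v')); rewrite vX.
have cRQ : #|R :|: Q| = #|R| + #|Q| by rewrite cardsU RQ cards0 subn0.
have cRP : #|H0| <= #|R| + #|PX| by rewrite /H0 (leq_card_setU R PX).
move: hphi; rewrite /phi cRQ => hphi.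
have : alpha (R :|: Q) + #|R| + 4 <= alpha H0 + #|R| + #|PX|.
  apply: leq_trans (_ : alpha (R :|: Q) + (#|R| + #|Q|) <= _).
    by rewrite -addnA leq_add2l leq_add2l.
  by apply: leq_trans hphi _; rewrite -addnA leq_add2l.
by rewrite addnAC [alpha H0 + _ + _]addnAC leq_add2r.
Qed.
End Local.

Lemma Qi_YC Y c e z : valid_choice E C Y c -> e \in Qi S Y c -> z \in e -> z \in Y \/ z \in C.
Proof.
case: c => [[[u v] u'] v'] /and5P[_ uY vY u'C /and3P[v'C _ _]].
rewrite /Qi !inE => /orP[/and3P[_ _ eY] ze|/orP[]/eqP-> ]; first by left; exact: (subsetP eY).
  by rewrite !inE => /orP[]/eqP->; [left|right].
by rewrite !inE => /orP[]/eqP->; [left|right].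
Qed.

Definition miss (e X : {set T}) := [forall z, (z \in e) ==> (z \notin X)].
Definition meets (e X : {set T}) := [exists z, (z \in e) && (z \in X)].

Lemma missP e X : miss e X = ~~ meets e X.
Proof. by rewrite /miss /meets negb_exists; apply: eq_forallb => z; rewrite negb_and implybE. Qed.

Definition Gf (f : {ffun {set T} -> T * T * T * T}) (D : {set {set T}}) :=
  (\bigcup_(X in D) Qi S X (f X)) :|: [set e in Qstar C Fs | [forall X in D, miss e X]].
Definition PD (D : {set {set T}}) :=
  [set e in Qstar C Fs | [exists X in D, meets e X]].

Lemma meet_two e X Y : e \in Fs -> X \in Ts -> Y \in Ts -> X != Y -> meets e X -> ~~ meets e Y.
Proof.
move=> eF XT YT nXY /existsP[z /andP[ze zX]]; apply/negP => /existsP[t /andP[te tY]].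
have [a [b [ab eab]]] := edgeE (subsetP hFE _ eF); subst e.
have eE := subsetP hFE _ eF.
have tX : t \notin X by apply: TnT YT XT _ tY; rewrite eq_sym.
have zY : z \notin Y by apply: TnT XT YT nXY zX.
move: ze te; rewrite !inE => /orP[]/eqP ? /orP[]/eqP ?; subst.
- by rewrite zX in tX.
- by move: (hnoTT XT YT nXY zX tY); rewrite eE.
- by move: (hnoTT XT YT nXY zX tY); rewrite setUC eE.
- by rewrite zX in tX.
Qed.

Lemma PX_Q X : X \in Ts -> PX X \subset Qstar C Fs.
Proof.
move=> XT; apply/subsetP => e; rewrite !inE => /andP[eF /existsP[z /andP[ze zX]]].
rewrite eF /=; apply/negP => /subsetP /(_ z ze); apply/negP; exact: TnC XT zX.
Qed.

Lemma induct n : forall D : {set {set T}}, D \subset Ts -> #|D| = n ->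
  exists f : {ffun {set T} -> T * T * T * T},
    (forall X, X \in D -> valid_choice E C X (f X)) /\
    alpha (Gf f D) + 4 * #|D| <= alpha (Qstar C Fs) + #|PD D|.
Proof.
elim: n => [|n IH] D DT cD.
  have D0 : D = set0 by apply: cards0_eq.
  subst D; have [c0 _] := C_nonempty.
  exists [ffun=> (c0, c0, c0, c0)]; split; first by move=> X; rewrite inE.
  have -> : Gf [ffun=> (c0, c0, c0, c0)] set0 = Qstar C Fs.
    rewrite /Gf big_set0 set0U; apply/setP => e; rewrite !inE.
    suff -> : [forall X in set0, miss e X] by rewrite andbT.
    by apply/forall_inP => X; rewrite inE.
  by rewrite cards0 muln0 addn0 leq_addr.
have [X XD] : exists X, X \in D by apply/set0Pn; rewrite -card_gt0 cD.
have XT := subsetP DT X XD.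
set D0 := D :\ X.
have D0T : D0 \subset Ts by apply: subset_trans DT; apply: subsetDl.
have cD0 : #|D0| = n by move: cD; rewrite (cardsD1 X) XD add1n => -[].
have [f0 [f0v IH0]] := IH D0 D0T cD0.
set B0 := \bigcup_(Y in D0) Qi S Y (f0 Y).
set M := [set e in Qstar C Fs | [forall Y in D, miss e Y]].
set R := B0 :|: M.
have hR : forall e z, e \in R -> z \in e -> z \notin X.
  move=> e z; rewrite inE => /orP[/bigcupP[Y YD0 eY] ze|].
    have YT := subsetP D0T Y YD0.
    have YX : Y != X by move: YD0; rewrite !inE => /andP[].
    case: (Qi_YC (f0v Y YD0) eY ze) => [zY|zC].
      by apply: TnT YT XT YX zY.
    by apply/negP => zX; move: (TnC XT zX); rewrite zC.
  rewrite inE => /andP[_ /forall_inP /(_ X XD)] /forallP /(_ z) /implyP h ze.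
  exact: h.
have [c [vc hloc]] := local_alpha XT hR.
set f := [ffun Y => if Y == X then c else f0 Y].
exists f; split.
  move=> Y YD; rewrite /f ffunE; case: (Y =P X) => [->//|/eqP YX].
  by apply: f0v; rewrite !inE YX.
have E1 : Gf f D = R :|: Qi S X c.
  rewrite /Gf (big_setD1 X XD) /= /f ffunE eqxx -/M.
  have -> : \bigcup_(i in D :\ X) Qi S i ([ffun Y => if Y == X then c else f0 Y] i) = B0.
    apply: eq_bigr => Y; rewrite !inE ffunE => /andP[/negbTE-> _] //.
  by rewrite /R -setUA setUC.
have E2 : Gf f0 D0 = H0 X R.
  rewrite /Gf -/B0 /H0 /R -setUA; congr (_ :|: _).
  apply/setP => e; rewrite !inE; apply/idP/idP.
    case/andP => eQ /forall_inP h0.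
    have [mX|nmX] := boolP (miss e X).
      rewrite eQ /=; apply/orP; left; apply/forall_inP => Y YD.
      case: (Y =P X) => [->//|/eqP YX]; apply: h0; by rewrite !inE YX.
    move: eQ => /andP[eF _]; apply/orP; right; rewrite eF /=.
    by move: nmX; rewrite missP negbK.
  case/orP => [/andP[eQ /forall_inP h]|/andP[eF me]].
    rewrite eQ /=; apply/forall_inP => Y; rewrite !inE => /andP[_ YD]; exact: h.
  have eQ : e \in Qstar C Fs by apply: (subsetP (PX_Q XT)); rewrite inE eF.
  move: eQ; rewrite inE => ->; apply/forall_inP => Y; rewrite !inE => /andP[YX YD].
  rewrite missP; apply: meet_two eF XT (subsetP DT Y YD) _ me; by rewrite eq_sym.
have E3 : PD D = PD D0 :|: PX X.
  apply/setP => e; rewrite !inE; apply/idP/idP.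
    case/andP => eQ /exists_inP[Y YD me].
    case: (Y =P X) => [YX|/eqP YX].
      subst Y; move: eQ => /andP[eF _]; apply/orP; right; rewrite eF; exact: me.
    rewrite eQ /=; apply/orP; left; apply/exists_inP; exists Y => //.
    by rewrite !inE YX.
  case/orP => [/andP[eQ /exists_inP[Y]]|/andP[eF me]].
    by rewrite !inE => /andP[_ YD] me; rewrite eQ; apply/exists_inP; exists Y.
  have eQ : e \in Qstar C Fs by apply: (subsetP (PX_Q XT)); rewrite inE eF.
  move: eQ; rewrite inE => ->; by apply/exists_inP; exists X.
have E3c : #|PD D| = #|PD D0| + #|PX X|.
  rewrite E3 cardsU; suff -> : PD D0 :&: PX X = set0 by rewrite cards0 subn0.
  apply/setP => e; rewrite !inE; apply/negbTE; apply/negP.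
  case/andP => /andP[_ /exists_inP[Y]]; rewrite !inE => /andP[YX YD] mY /andP[eF mX].
  have YX' : X != Y by rewrite eq_sym.
  by move: (meet_two eF XT (subsetP DT Y YD) YX' mX); rewrite mY.
rewrite E1 E3c cD; move: hloc IH0; rewrite E2 cD0.
move=> h1 h2; rewrite mulnS; lia.
Qed.
End S2.

Unset Implicit Arguments.
Import Order.TTheory GRing.Theory Num.Theory.
Local Open Scope ring_scope.

Lemma bigmin_seq (I : eqType) (r : seq I) (P : pred I) (F : I -> nat) x0 i :
  i \in r -> P i -> (\big[minn/x0]_(j <- r | P j) F j <= F i)%N.
Proof.
elim: r => // a r IH; rewrite in_cons big_cons => /orP[/eqP<- | ir] Pi.
  by rewrite Pi geq_minl.
case: (P a); last exact: IH ir Pi.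
exact: leq_trans (geq_minr _ _) (IH ir Pi).
Qed.

Lemma bigmin_le (I : finType) (P : pred I) (F : I -> nat) x0 i :
  P i -> (\big[minn/x0]_(j | P j) F j <= F i)%N.
Proof. by move=> Pi; apply: bigmin_seq Pi; rewrite mem_index_enum. Qed.

Theorem lemma14 (R : realType) :
  exists eps0 : R, 0 < eps0 /\
  forall eps : R, 0 < eps -> eps <= eps0 ->
  forall (T : finType) (E S : {set {set T}}) (C : {set T})
         (Ts : {set {set T}}) (Fs : {set {set T}}),
    structured (5 / 4 : R) eps E ->
    core_triangle E S C Ts ->
    Fs \subset E ->
    two_ec_on setT Fs ->
    edges_in C S \subset Fs ->
    ((alpha (Qstar C Fs))%:Z >=
       4 * (#|Ts|)%:Z - (#|Qstar C Fs|)%:Z + (alphaS E S C Ts)%:Z)%R.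
Proof.
exists 1; split => // eps _ _ T E S C Ts Fs.
case=> hsimple hvc _ _ _.
case=> [[hSE _ hcomps hCT _] [htri hnoTT]] hFE h2ec _.
have htri' : forall X, X \in Ts -> #|X| = 3 /\
    forall x y, x \in X -> y \in X -> x != y -> [set x; y] \in S.
  by move=> X XT; have [h1 h2] := htri X XT; split.
have [f [fv hf]] := induct hsimple hvc hSE hcomps hCT htri' hnoTT hFE h2ec (subxx Ts) erefl.
set Q := \bigcup_(X in Ts) Qi S X (f X).
have GQ : Gf S C Fs f Ts = Q.
  rewrite /Gf -/Q; suff -> : [set e in Qstar C Fs | [forall X in Ts, miss e X]] = set0.
    by rewrite setU0.
  apply/setP => e; rewrite !inE; apply/negbTE; apply/negP.
  case/andP => /andP[eF /subsetPn[z ze zC]] /forall_inP h.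
  case: (vert_part hsimple hvc hSE hcomps hCT htri' hnoTT hFE h2ec z) => [zC'|[X XT zX]].
    by rewrite zC' in zC.
  by move: (h X XT) => /forallP /(_ z); rewrite ze zX.
have vQ : validQ E S C Ts Q.
  by apply/existsP; exists f; rewrite eqxx andbT; apply/forall_inP.
have aS : (alphaS E S C Ts <= alpha Q)%N by apply: bigmin_le.
have cP : (#|PD C Fs Ts| <= #|Qstar C Fs|)%N by apply: subset_leq_card; apply/subsetP => e; rewrite /PD inE => /andP[].
rewrite GQ in hf.
lia.
Qed.
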